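(* For any formulas $A$ and $B$, each of the following rules (with $\Gamma,\Delta$ arbitrary finite multisets of formulas) is strongly admissible in $\mathsf{Grz}_\infty+\mathsf{cut}$: $\mathsf{li}_{A\to B}$: from $\Gamma,A\to B\Rightarrow\Delta$ infer $\Gamma,B\Rightarrow\Delta$; $\mathsf{ri}_{A\to B}$: from $\Gamma,A\to B\Rightarrow\Delta$ infer $\Gamma\Rightarrow A,\Delta$; $\mathsf{i}_{A\to B}$: from $\Gamma\Rightarrow A\to B,\Delta$ infer $\Gamma,A\Rightarrow B,\Delta$; $\mathsf{i}_\bot$: from $\Gamma\Rightarrow\bot,\Delta$ infer $\Gamma\Rightarrow\Delta$; $\mathsf{li}_{\Box A}$: from $\Gamma\Rightarrow\Box A,\Delta$ infer $\Gamma\Rightarrow A,\Delta$.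
   Context: Formulas are built from $\bot$ and atoms by $\to$ and $\Box$; sequents $\Gamma\Rightarrow\Delta$ have finite multisets of formulas on each side; $\Box\Pi$ denotes $\{\Box B:B\in\Pi\}$. The calculus $\mathsf{Grz}_\infty+\mathsf{cut}$ has initial sequents $\Gamma,p\Rightarrow p,\Delta$ ($p$ atomic), $\Gamma,\bot\Rightarrow\Delta$, and rules $(\to_L)$ from $\Gamma,B\Rightarrow\Delta$ and $\Gamma\Rightarrow A,\Delta$ infer $\Gamma,A\to B\Rightarrow\Delta$; $(\to_R)$ from $\Gamma,A\Rightarrow B,\Delta$ infer $\Gamma\Rightarrow A\to B,\Delta$; $(\mathsf{refl})$ from $\Gamma,B,\Box B\Rightarrow\Delta$ infer $\Gamma,\Box B\Rightarrow\Delta$; $(\Box)$ from left premise $\Gamma,\Box\Pi\Rightarrow A,\Delta$ and right premise $\Box\Pi\Rightarrow A$ infer $\Gamma,\Box\Pi\Rightarrow\Box A,\Delta$; $(\mathsf{cut})$ from $\Gamma\Rightarrow A,\Delta$ and $\Gamma,A\Rightarrow\Delta$ infer $\Gamma\Rightarrow\Delta$. An $\infty$-proof is a possibly infinite tree of sequents built by these rules with leaves labelled by initial sequents, in which every infinite branch passes through a right premise of $(\Box)$ infinitely often; $\mathcal P$ is the set of all $\infty$-proofs. The $n$-fragment of an $\infty$-proof is the finite tree obtained by cutting every branch at the $n$-th (from the root) right premise of $(\Box)$; the main fragment is the $1$-fragment; the local height $|\pi|$ is the length of the longest branch of the main fragment (an $\infty$-proof consisting only of an initial sequent has height $0$). Write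 $\pi\sim_n\tau$ if the $n$-fragments of $\pi,\tau$ coincide, and $\pi\sim_0\tau$ always. $\mathcal P_n$ is the set of $\infty$-proofs with no application of $(\mathsf{cut})$ in their $n$-fragment, and $\mathcal P_0=\mathcal P$. A single-premise rule is strongly admissible in $\mathsf{Grz}_\infty+\mathsf{cut}$ if there is a mapping $\mathsf u:\mathcal P\to\mathcal P$ such that: (i) $\mathsf u$ is non-expansive: $\pi\sim_n\pi'$ implies $\mathsf u(\pi)\sim_n\mathsf u(\pi')$ for all $n$; (ii) $\mathsf u$ is adequate: $\pi\in\mathcal P_n$ implies $\mathsf u(\pi)\in\mathcal P_n$ for all $n$; (iii) $|\mathsf u(\pi)|\le|\pi|$ for all $\pi\in\mathcal P$; (iv) for every instance of the rule, $\mathsf u$ maps every $\infty$-proof of its premise to an $\infty$-proof of its conclusion. *)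

(* Defs.v *)
From HB Require Import structures.
From mathcomp Require Import all_boot.
From mathcomp Require Import finmap multiset.

Set Implicit Arguments.
Unset Strict Implicit.
Unset Printing Implicit Defensive.

Local Open Scope fset_scope.
Local Open Scope mset_scope.

Inductive form : Type :=
  | Atom of nat
  | Bot
  | Imp of form & form
  | Box of form.

Fixpoint form_enc (f : form) : GenTree.tree nat :=
  match f with
  | Atom p => GenTree.Leaf p
  | Bot => GenTree.Node 0 [::]
  | Imp A B => GenTree.Node 1 [:: form_enc A; form_enc B]
  | Box A => GenTree.Node 2 [:: form_enc A]
  end.

Fixpoint form_dec (t : GenTree.tree nat) : option form :=
  match t with
  | GenTree.Leaf p => Some (Atom p)
  | GenTree.Node 0 [::] => Some Bot
  | GenTree.Node 1 [:: a; b] =>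
      match form_dec a, form_dec b with
      | Some A, Some B => Some (Imp A B)
      | _, _ => None
      end
  | GenTree.Node 2 [:: a] =>
      match form_dec a with Some A => Some (Box A) | None => None end
  | _ => None
  end.

Lemma form_encK : pcancel form_enc form_dec.
Proof. by elim=> [p||A IHA B IHB|A IHA] //=; rewrite ?IHA ?IHB. Qed.

HB.instance Definition _ := Countable.copy form (pcan_type form_encK).

Definition fmset := {mset form}.
Definition sequent := (fmset * fmset)%type.

Definition boxes (Pi : fmset) : fmset := seq_mset (map Box (enum_mset Pi)).

Inductive rule : Type :=
  | RInit
  | RImpL of form & form
  | RImpR of form & form
  | RRefl of form
  | RBox of fmset & form
  | RCut of form.

Definition arity (r : rule) : nat :=
  match r with
  | RInit => 0
  | RImpR _ _ | RRefl _ => 1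
  | RImpL _ _ | RBox _ _ | RCut _ => 2
  end.

(* For (Box), premise 0 is the left
   premise and premise 1 is the right premise  Box Pi => A. *)
Definition rule_ok (r : rule) (s : sequent) (p : nat -> option sequent) : Prop :=
  match r with
  | RInit =>
      (exists (G D : fmset) (q : nat), s = (Atom q +` G, Atom q +` D))
      \/ (exists (G D : fmset), s = (Bot +` G, D))
  | RImpL A B => exists G D : fmset,
      [/\ s = (Imp A B +` G, D), p 0 = Some (B +` G, D) & p 1 = Some (G, A +` D)]
  | RImpR A B => exists G D : fmset,
      s = (G, Imp A B +` D) /\ p 0 = Some (A +` G, B +` D)
  | RRefl B => exists G D : fmset,
      s = (Box B +` G, D) /\ p 0 = Some (B +` (Box B +` G), D)
  | RBox Pi A => exists G D : fmset,
      [/\ s = (G `+` boxes Pi, Box A +` D),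
          p 0 = Some (G `+` boxes Pi, A +` D)
        & p 1 = Some (boxes Pi, [mset A])]
  | RCut A => exists G D : fmset,
      [/\ s = (G, D), p 0 = Some (G, A +` D) & p 1 = Some (A +` G, D)]
  end.

(* Possibly infinite trees: a node is addressed by the sequence of child
   indices from the root; [T a = None] means there is no node at a.    *)
Definition tree := seq nat -> option (sequent * rule).

Definition seq_at (T : tree) (a : seq nat) : option sequent := omap fst (T a).

Definition is_box_node (o : option (sequent * rule)) : bool :=
  if o is Some (_, RBox _ _) then true else false.

(* number of right premises of (Box) on the path from the root to a
   (including a itself if a is such a right premise) *)
Definition rcount (T : tree) (a : seq nat) : nat :=
  count (fun k => is_box_node (T (take k a)) && (nth 0 a k == 1)) (iota 0 (size a)).

Definition is_inf_proof (T : tree) : Prop :=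
  [/\ T [::] <> None,
      (forall a i, T (rcons a i) <> None -> T a <> None),
      (forall a s r, T a = Some (s, r) ->
          (forall i, T (rcons a i) <> None <-> i < arity r)
          /\ rule_ok r s (fun i => seq_at T (rcons a i)))
    & (* every infinite branch passes through a right premise of (Box)
         infinitely often *)
      (forall f : nat -> nat, (forall k, T (mkseq f k) <> None) ->
         forall m, exists2 k, m <= k &
           is_box_node (T (mkseq f k)) && (f k == 1))].

Definition inf_proof := {T : tree | is_inf_proof T}.
Definition tr (p : inf_proof) : tree := proj1_sig p.

(* n-fragment: every branch is cut at the n-th right premise of (Box);
   that node stays in the fragment as a leaf (its sequent belongs to the
   fragment, the rule applied to it and its children do not).
   [in_frag T n a]: position a belongs to the n-fragment of T
   (no position belongs to the 0-fragment). *)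
Definition in_frag (T : tree) (n : nat) (a : seq nat) : Prop :=
  rcount T (take (size a).-1 a) < n.

(* the rule applied at a belongs to the n-fragment *)
Definition rule_in_frag (T : tree) (n : nat) (a : seq nat) : Prop :=
  rcount T a < n.

Definition frag_agree (n : nat) (T U : tree) : Prop :=
  forall a, in_frag T n a ->
    seq_at T a = seq_at U a /\ (rule_in_frag T n a -> T a = U a).

Definition sim (n : nat) (p q : inf_proof) : Prop :=
  n = 0 \/ (frag_agree n (tr p) (tr q) /\ frag_agree n (tr q) (tr p)).

Definition in_Pn (n : nat) (p : inf_proof) : Prop :=
  forall a s A, tr p a = Some (s, RCut A) -> ~ rule_in_frag (tr p) n a.

(* |p| <= k : every branch of the main fragment (1-fragment) has length
   at most k, i.e. the local height of p is at most k. *)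
Definition height_le (p : inf_proof) (k : nat) : Prop :=
  forall a, in_frag (tr p) 1 a -> tr p a <> None -> size a <= k.

Definition root_seq (p : inf_proof) : option sequent := seq_at (tr p) [::].

(* A single-premise rule: a relation  premise -> conclusion. *)
Definition srule := sequent -> sequent -> Prop.

Definition strongly_admissible (R : srule) : Prop :=
  exists u : inf_proof -> inf_proof,
    [/\ (forall n p q, sim n p q -> sim n (u p) (u q)),
        (forall n p, in_Pn n p -> in_Pn n (u p)),
        (forall p k, height_le p k -> height_le (u p) k)
      & (forall s1 s2, R s1 s2 ->
           forall p, root_seq p = Some s1 -> root_seq (u p) = Some s2)].

Definition li_imp (A B : form) : srule := fun s1 s2 =>
  exists G D : fmset, s1 = (Imp A B +` G, D) /\ s2 = (B +` G, D).
Definition ri_imp (A B : form) : srule := fun s1 s2 =>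
  exists G D : fmset, s1 = (Imp A B +` G, D) /\ s2 = (G, A +` D).
Definition i_imp (A B : form) : srule := fun s1 s2 =>
  exists G D : fmset, s1 = (G, Imp A B +` D) /\ s2 = (A +` G, B +` D).
Definition i_bot : srule := fun s1 s2 =>
  exists G D : fmset, s1 = (G, Bot +` D) /\ s2 = (G, D).
Definition li_box (A : form) : srule := fun s1 s2 =>
  exists G D : fmset, s1 = (G, Box A +` D) /\ s2 = (G, A +` D).

(* Main.v *)
Require Import Defs.
From mathcomp Require Import all_boot.
From mathcomp Require Import finmap multiset.
From Stdlib Require Import Classical FunctionalExtensionality.

Unset Strict Implicit.
Unset Printing Implicit Defensive.

Lemma rcount_nil T : rcount T [::] = 0.
Proof. by []. Qed.

Lemma rcount_rcons T a i :
  rcount T (rcons a i) = rcount T a + (is_box_node (T a) && (i == 1)).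
Proof.
rewrite /rcount size_rcons -(addn1 (size a)) iotaD count_cat /= add0n addn0.

congr (_ + _).
  apply: eq_in_count => k; rewrite mem_iota /= add0n => hk.
  by rewrite -cats1 takel_cat ?(ltnW hk) // nth_cat hk.
by rewrite -cats1 take_size_cat // nth_cat ltnn subnn.
Qed.

Lemma in_frag_nil T n : in_frag T n [::] <-> 0 < n.
Proof. by []. Qed.

Lemma in_frag_rcons T n a i : in_frag T n (rcons a i) <-> rcount T a < n.
Proof. by rewrite /in_frag size_rcons /= -cats1 take_size_cat. Qed.

Lemma rcount_lt_in_frag T n a : rcount T a < n -> in_frag T n a.
Proof.
case/lastP: a => [//|a i].
rewrite rcount_rcons in_frag_rcons => h; exact: leq_ltn_trans (leq_addr _ _) h.
Qed.

Lemma agree_at n T U x : frag_agree n T U -> rcount T x < n -> T x = U x.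
Proof. by move=> h hx; apply: (h x (rcount_lt_in_frag _ _ _ hx)).2. Qed.

Lemma agree_seq n T U x : frag_agree n T U -> in_frag T n x -> seq_at T x = seq_at U x.
Proof. by move=> h hx; apply: (h x hx).1. Qed.

Definition isbox (r : rule) : bool := if r is RBox _ _ then true else false.

Lemma is_box_nodeE (o : option (sequent * rule)) :
  is_box_node o = if o is Some (_, r) then isbox r else false.
Proof. by case: o => [[s []]|]. Qed.

Lemma rule_ok_ext r s p q : p =1 q -> rule_ok r s p -> rule_ok r s q.
Proof. by move=> /functional_extensionality ->. Qed.

Lemma T_prefix (T : tree) : is_inf_proof T ->
  forall a j, T a <> None -> T (take j a) <> None.
Proof.
case=> _ hp _ _ a j; elim/last_ind: a j => [|a i IH] j.
  by case: j.
move=> h; have ha := hp _ _ h.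
case: (leqP (size (rcons a i)) j) => hj; first by rewrite take_oversize.
rewrite size_rcons ltnS in hj.
by rewrite -cats1 takel_cat //; apply: IH.
Qed.


Lemma mkseq_take (A : Type) (g : nat -> A) j n : j <= n -> take j (mkseq g n) = mkseq g j.
Proof.
elim: n => [|n IH] hj; first by move: hj; rewrite leqn0 => /eqP ->.
case: (ltngtP j n.+1) => h; last by rewrite h take_oversize ?size_mkseq.
  by rewrite mkseqS -cats1 takel_cat ?size_mkseq // IH.
by move: hj; rewrite leqNgt h.
Qed.

Lemma mkseq_eq_in (A : Type) (f g : nat -> A) n :
  (forall i, i < n -> f i = g i) -> mkseq f n = mkseq g n.
Proof. by move=> h; rewrite /mkseq; apply/eq_in_map => i; rewrite mem_iota add0n => /andP [_ /h]. Qed.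


Section Generic.
Variables (Pb : sequent -> bool) (tf : sequent -> sequent) (skip : rule -> option nat).

Hypothesis H_skip : forall r s p c, skip r = Some c -> rule_ok r s p -> Pb s ->
  [/\ c < arity r, p c = Some (tf s) & ~~ (isbox r && (c == 1))].
Hypothesis H_step : forall r s p, skip r = None -> rule_ok r s p -> Pb s ->
  rule_ok r (tf s) (fun i => if isbox r && (i == 1) then p i else omap tf (p i))
  /\ (forall i s', i < arity r -> ~~ (isbox r && (i == 1)) -> p i = Some s' -> Pb s').

Definition norm (T : tree) (st : seq nat * bool) : seq nat * bool :=
  let: (b, act) := st in
  if act then
    match T b with
    | Some (_, r) => match skip r with Some c => (rcons b c, false) | None => (b, act) end
    | None => (b, act) end
  else (b, act).

Definition step (T : tree) (st : seq nat * bool) (i : nat) : seq nat * bool :=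
  let: (b, act) := norm T st in (rcons b i, act && ~~ (is_box_node (T b) && (i == 1))).

Definition proot (T : tree) : bool := if seq_at T [::] is Some s then Pb s else false.

Definition pos0 (T : tree) (a : seq nat) := foldl (step T) ([::], proot T) a.

Definition uT (T : tree) : tree := fun a =>
  let: (b, act) := norm T (pos0 T a) in
  match T b with Some (s, r) => Some (if act then tf s else s, r) | None => None end.

Lemma pos0_nil T : pos0 T [::] = ([::], proot T).
Proof. by []. Qed.

Lemma pos0_rcons T a i : pos0 T (rcons a i) = step T (pos0 T a) i.
Proof. by rewrite /pos0 foldl_rcons. Qed.

Lemma norm_cases T b act :
  (norm T (b, act) = (b, act) /\ (act -> forall s r, T b = Some (s, r) -> skip r = None))
  \/ (exists s r c, [/\ act = true, T b = Some (s, r), skip r = Some c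
                      & norm T (b, act) = (rcons b c, false)]).
Proof.
rewrite /norm; case: act; last by left.
case e: (T b) => [[s r]|]; last by left.
case e2: (skip r) => [c|]; last by left; split=> // _ s' r' [_ <-].
by right; exists s, r, c.
Qed.

Lemma norm_eq T U b act : T b = U b -> norm T (b, act) = norm U (b, act).
Proof. by rewrite /norm => ->. Qed.

Definition Inv (T : tree) (st : seq nat * bool) :=
  st.2 -> rcount T st.1 = 0 /\ (forall s r, T st.1 = Some (s, r) -> Pb s).

Section Fixed.
Variable T : tree.
Hypothesis hT : is_inf_proof T.

Lemma hT_pref a i : T (rcons a i) <> None -> T a <> None.
Proof. by case: hT => _ h _ _; apply: h. Qed.

Lemma hT_rule a s r : T a = Some (s, r) ->
  (forall i, T (rcons a i) <> None <-> i < arity r)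
  /\ rule_ok r s (fun i => seq_at T (rcons a i)).
Proof. by case: hT => _ _ h _; apply: h. Qed.

Lemma inv_pos0 a : Inv T (pos0 T a).
Proof.
elim/last_ind: a => [|a i IH].
  rewrite pos0_nil /Inv /= /proot /seq_at => h; split => // s r e.
  by rewrite e /= in h.
rewrite pos0_rcons /step.
case: (pos0 T a) IH => b act IH.
case: (norm_cases T b act) => [[-> hn]|[s [r [c [-> e e2 ->]]]]] //.
rewrite /Inv /= => /andP [ha hbox].
have [h0 h1] := IH ha.
split.
  by rewrite rcount_rcons h0 (negbTE hbox).
move=> s' r' e'.
case eb: (T b) => [[s r]|]; last first.
  by exfalso; apply: (@hT_pref b i); rewrite ?eb ?e'.
have [hc hok] := hT_rule _ _ _ eb.
have hs := h1 _ _ eb.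
have [_ hP] := H_step _ _ _ (hn ha _ _ eb) hok hs.
apply: (hP i); first by apply/hc; rewrite e'.
  by rewrite is_box_nodeE eb in hbox.
by rewrite /seq_at e'.
Qed.

Lemma norm_inv st : Inv T st -> Inv T (norm T st).
Proof.
case: st => b act; case: (norm_cases T b act) => [[-> _]|[s [r [c [_ _ _ ->]]]]] //.
Qed.

Lemma rcount_norm st : Inv T st -> rcount T (norm T st).1 = rcount T st.1.
Proof.
case: st => b act hI.
case: (norm_cases T b act) => [[-> _]|[s [r [c [ea e e2 ->]]]]] //=.
have [_ hok] := hT_rule _ _ _ e.
have [h0 _] := hI ea.
have [_ _ hc] := H_skip _ _ _ _ e2 hok ((hI ea).2 _ _ e).
by rewrite rcount_rcons is_box_nodeE e (negbTE hc) addn0.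
Qed.

Lemma seq_uT a : seq_at (uT T) a =
  if (pos0 T a).2 then omap tf (seq_at T (pos0 T a).1) else seq_at T (pos0 T a).1.
Proof.
have hI := inv_pos0 a.
rewrite /seq_at /uT; case: (pos0 T a) hI => b act hI.
case: (norm_cases T b act) => [[-> _]|[s [r [c [ea e e2 ->]]]]].
  by case: (T b) => [[s r]|] //; case: act {hI}.
have [_ hok] := hT_rule _ _ _ e.
have [_ hc _] := H_skip _ _ _ _ e2 hok ((hI ea).2 _ _ e).
rewrite ea e /=; move: hc; rewrite /seq_at.
by case: (T (rcons b c)) => [[s' r']|] //= [->].
Qed.

Lemma rule_uT a : omap snd (uT T a) = omap snd (T (norm T (pos0 T a)).1).
Proof.
rewrite /uT; case: (norm T (pos0 T a)) => b act /=.
by case: (T b) => [[s r]|].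
Qed.

Lemma is_box_uT a : is_box_node (uT T a) = is_box_node (T (norm T (pos0 T a)).1).
Proof.
have := rule_uT a; rewrite !is_box_nodeE.
by case: (uT T a) => [[? ?]|]; case: (T _) => [[? ?]|] //= [->].
Qed.

Lemma none_uT a : (uT T a <> None) <-> (T (norm T (pos0 T a)).1 <> None).
Proof.
have := rule_uT a.
by case: (uT T a) => [[? ?]|]; case: (T _) => [[? ?]|].
Qed.

Lemma rcount_uT a : rcount (uT T) a = rcount T (pos0 T a).1.
Proof.
elim/last_ind: a => [|a i IH] //.
rewrite rcount_rcons IH is_box_uT pos0_rcons /step.
have := rcount_norm _ (inv_pos0 a).
case: (norm T (pos0 T a)) => nb nact /= e1.
by rewrite rcount_rcons e1.
Qed.

Lemma size_pos0 a : size a <= size (pos0 T a).1.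
Proof.
elim/last_ind: a => [|a i IH] //.
rewrite pos0_rcons /step size_rcons.
case: (pos0 T a) IH => b act IH.
case: (norm_cases T b act) => [[-> _]|[s [r [c [ea e e2 ->]]]]] /=.
  by rewrite size_rcons.
by rewrite !size_rcons ltnS (leq_trans IH).
Qed.

Lemma none_norm st : Inv T st -> (T (norm T st).1 <> None) <-> (T st.1 <> None).
Proof.
case: st => b act hI.
case: (norm_cases T b act) => [[-> _]|[s [r [c [ea e e2 ->]]]]] //=.
have [hc hok] := hT_rule _ _ _ e.
have [hlt _ _] := H_skip _ _ _ _ e2 hok ((hI ea).2 _ _ e).
rewrite e; split => // _; exact/hc.
Qed.

Lemma none_uT' a : (uT T a <> None) <-> (T (pos0 T a).1 <> None).
Proof. by rewrite none_uT; apply: none_norm; apply: inv_pos0. Qed.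

Lemma act_pos0 a : (pos0 T a).2 -> (pos0 T a).1 = a.
Proof.
elim/last_ind: a => [|a i IH] //.
rewrite pos0_rcons /step.
case: (pos0 T a) IH => b act IH.
case: (norm_cases T b act) => [[-> _]|[s [r [c [ea e e2 ->]]]]] //=.
by case/andP => h _; rewrite -(IH h).
Qed.


Lemma pos0_rcons_eq a i : pos0 T (rcons a i) =
  ((rcons (norm T (pos0 T a)).1 i),
   (norm T (pos0 T a)).2 && ~~ (is_box_node (T (norm T (pos0 T a)).1) && (i == 1))).
Proof. by rewrite pos0_rcons /step; case: (norm T (pos0 T a)). Qed.

Lemma norm_act st : (norm T st).2 -> Inv T st ->
  forall s r, T (norm T st).1 = Some (s, r) -> skip r = None /\ Pb s.
Proof.
case: st => b act; case: (norm_cases T b act) => [[-> hn]|[s [r [c [_ _ _ ->]]]]] //=.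
move=> ha hI s r e; split; first exact: hn ha _ _ e.
exact: (hI ha).2 _ _ e.
Qed.

Lemma uT_inf : is_inf_proof (uT T).
Proof.
have hT' := hT; case: hT' => h0 hp hr hinf.
split.
- apply/none_uT'; rewrite pos0_nil /=; exact: h0.
- move=> a i; rewrite !none_uT' pos0_rcons_eq /= => h.
  apply/(none_norm _ (inv_pos0 a)); exact: hp _ _ h.
- move=> a s' r' e.
  have hI := inv_pos0 a.
  have hs : forall i, seq_at (uT T) (rcons a i) =
     if (norm T (pos0 T a)).2 && ~~ (is_box_node (T (norm T (pos0 T a)).1) && (i == 1))
     then omap tf (seq_at T (rcons (norm T (pos0 T a)).1 i))
     else seq_at T (rcons (norm T (pos0 T a)).1 i).
    by move=> i; rewrite seq_uT pos0_rcons_eq.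
  have hn : forall i, uT T (rcons a i) <> None <-> T (rcons (norm T (pos0 T a)).1 i) <> None.
    by move=> i; rewrite none_uT' pos0_rcons_eq.
  have hna := norm_act (pos0 T a).
  move: e hs hn hna; rewrite /uT.
  case: (norm T (pos0 T a)) => nb nact /=.
  case enb: (T nb) => [[s r]|] // [<- <-] hs hn hna.
  split; first by move=> i; rewrite hn; exact: ((hr _ _ _ enb).1 i).
  case: nact hna hs => hna hs.
    have [hsk hP] := hna isT hI _ _ (erefl _).
    have [hrr _] := H_step _ _ _ hsk (hr _ _ _ enb).2 hP.
    apply: rule_ok_ext hrr => i; rewrite hs /=.
    by case: (isbox r && (i == 1)).
  by apply: rule_ok_ext (hr _ _ _ enb).2 => i; rewrite hs.
- move=> f hf m.
  have hbox k : is_box_node (uT T (mkseq f k)) = is_box_node (T (norm T (pos0 T (mkseq f k))).1).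
    exact: is_box_uT.
  case: (classic (exists k0, (norm T (pos0 T (mkseq f k0))).1 <> (pos0 T (mkseq f k0)).1)).
  + case=> k0 hk0.
    have hI0 := inv_pos0 (mkseq f k0).
    move: hk0 hI0; case e0: (pos0 T (mkseq f k0)) => [b act].
    case: (norm_cases T b act) => [[-> _] /(_ erefl) //|[s [r [c [ea e e2 en]]]] _ _].
    have hb : b = mkseq f k0.
      by have := act_pos0 (mkseq f k0); rewrite e0 /=; apply; rewrite ea.
    pose g j := if j < k0 then f j else if j == k0 then c else f j.-1.
    have hgf : mkseq g k0 = mkseq f k0.
      by apply: mkseq_eq_in => i hi; rewrite /g hi.
    have claim : forall d, (norm T (pos0 T (mkseq f (k0 + d)))).1 = mkseq g (k0 + d).+1
                       /\ (norm T (pos0 T (mkseq f (k0 + d)))).2 = false.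
      elim=> [|d [IH1 IH2]].
        by rewrite addn0 e0 en /= mkseqS hgf /g ltnn eqxx hb.
      rewrite addnS mkseqS pos0_rcons_eq IH2 /= IH1; split => //.
      rewrite [in RHS]mkseqS; congr rcons.
      have h1 : ((k0 + d).+1 < k0) = false by rewrite ltnNge leqW // leq_addr.
      have h2 : ((k0 + d).+1 == k0) = false.
        by rewrite eqn_leq [(k0 + d).+1 <= k0]leqNgt ltnS leq_addr.
      by rewrite /g h1 h2.
    have hTg : forall j, T (mkseq g j) <> None.
      move=> j.
      have := hf (k0 + j); rewrite none_uT (claim j).1 => hh.
      rewrite -(mkseq_take _ g j (k0 + j).+1); last by rewrite leqW // leq_addl.
      exact: T_prefix hT _ _ hh.
    have [k hk hbk] := hinf g hTg (k0 + m).+1.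
    case: k hk hbk => [//|k] hk hbk.
    rewrite ltnS in hk.
    have [d hd] : exists d, k = k0 + d by exists (k - k0); rewrite subnKC // (leq_trans (leq_addr _ _) hk).
    subst k.
    exists (k0 + d); first by apply: leq_trans (leq_addl k0 m) hk.
    rewrite hbox (claim d).1.
    have h1 : ((k0 + d).+1 < k0) = false by rewrite ltnNge leqW // leq_addr.
    have h2 : ((k0 + d).+1 == k0) = false.
      by rewrite eqn_leq [(k0 + d).+1 <= k0]leqNgt ltnS leq_addr.
    have hg : g (k0 + d).+1 = f (k0 + d) by rewrite /g h1 h2.
    by rewrite -hg.
  + move=> hno.
    have hnj : forall k, (norm T (pos0 T (mkseq f k))).1 = (pos0 T (mkseq f k)).1.
      by move=> k; apply: NNPP => hh; apply: hno; exists k.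
    have hpos : forall k, (pos0 T (mkseq f k)).1 = mkseq f k.
      elim=> [|k IH] //; by rewrite mkseqS pos0_rcons_eq /= hnj IH.
    have hTf : forall k, T (mkseq f k) <> None.
      by move=> k; rewrite -(hpos k); apply/none_uT'.
    have [k hk hbk] := hinf f hTf m.
    by exists k => //; rewrite hbox hnj hpos.
Qed.


Lemma size_norm st : size st.1 <= size (norm T st).1.
Proof.
case: st => b act; case: (norm_cases T b act) => [[-> _]|[s [r [c [_ _ _ ->]]]]] //=.
by rewrite size_rcons.
Qed.

Lemma in_frag_pos0 n a : 0 < n -> in_frag (uT T) n a -> in_frag T n (pos0 T a).1.
Proof.
case/lastP: a => [//|a i] hn.
rewrite in_frag_rcons rcount_uT pos0_rcons_eq /= in_frag_rcons.
by rewrite (rcount_norm _ (inv_pos0 a)).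
Qed.

Lemma in_frag_norm n st : Inv T st -> in_frag T n st.1 -> in_frag T n (norm T st).1.
Proof.
case: st => b act hI hf.
case: (norm_cases T b act) => [[-> _]|[s [r [c [ea e e2 ->]]]]] //=.
rewrite in_frag_rcons (hI ea).1.
exact: leq_ltn_trans (leq0n _) hf.
Qed.

Lemma height_uT k : (forall a, in_frag T 1 a -> T a <> None -> size a <= k) ->
  (forall a, in_frag (uT T) 1 a -> uT T a <> None -> size a <= k).
Proof.
move=> H a hf hn.
have := H (norm T (pos0 T a)).1 (in_frag_norm 1 _ (inv_pos0 a) (in_frag_pos0 1 a isT hf))
           (proj1 (none_uT a) hn).
apply: leq_trans; apply: leq_trans (size_pos0 a) _; exact: size_norm.
Qed.

Lemma Pn_uT n : (forall a s A, T a = Some (s, RCut A) -> ~ rule_in_frag T n a) ->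
  (forall a s A, uT T a = Some (s, RCut A) -> ~ rule_in_frag (uT T) n a).
Proof.
move=> H a s A e; rewrite /rule_in_frag rcount_uT -(rcount_norm _ (inv_pos0 a)).
have := rule_uT a; rewrite e /=.
case e2: (T _) => [[s0 r0]|] //= [] hr; subst r0.
exact: H e2.
Qed.

Lemma root_uT : seq_at (uT T) [::] =
  if proot T then omap tf (seq_at T [::]) else seq_at T [::].
Proof. by rewrite seq_uT pos0_nil. Qed.

End Fixed.

Lemma step_eq T U st i : T st.1 = U st.1 -> T (norm T st).1 = U (norm T st).1 ->
  step T st i = step U st i.
Proof.
case: st => b act h1 h2; rewrite /step (norm_eq T U b act h1).
rewrite (norm_eq T U b act h1) in h2.
by case: (norm U (b, act)) h2 => nb nact /= ->.
Qed.

Lemma agree_uT n T U : is_inf_proof T -> is_inf_proof U -> 0 < n ->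
  frag_agree n T U -> frag_agree n (uT T) (uT U).
Proof.
move=> hT hU hn hA.
have K : forall a, in_frag (uT T) n a -> pos0 T a = pos0 U a.
  elim/last_ind => [|a i IH] hf.
    rewrite !pos0_nil /proot (agree_seq n T U [::] hA) //.
  rewrite in_frag_rcons in hf.
  rewrite !pos0_rcons -(IH (rcount_lt_in_frag _ _ _ hf)).
  rewrite rcount_uT // in hf.
  apply: step_eq; first exact: agree_at hA hf.
  by apply: agree_at hA _; rewrite (rcount_norm T hT _ (inv_pos0 T hT a)).
move=> a hf; have Ka := K a hf; split.
  rewrite !seq_uT // -Ka (agree_seq n T U _ hA) //.
  exact: in_frag_pos0 T hT n a hn hf.
rewrite /rule_in_frag rcount_uT // => hr.
have hb := agree_at n T U _ hA hr.
have hnb : T (norm T (pos0 T a)).1 = U (norm T (pos0 T a)).1.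
  by apply: agree_at hA _; rewrite (rcount_norm T hT _ (inv_pos0 T hT a)).
rewrite /uT -Ka.
move: hb hnb; case: (pos0 T a) => b act hb.
rewrite (norm_eq T U b act hb).
by case: (norm U (b, act)) => nb nact ->.
Qed.

Lemma generic_sa (R : srule) :
  (forall s1 s2, R s1 s2 -> Pb s1 /\ tf s1 = s2) -> strongly_admissible R.
Proof.
move=> HR.
exists (fun p => exist _ (uT (tr p)) (uT_inf (tr p) (proj2_sig p))); split.
- move=> n p q; case: (posnP n) => [-> _|hn]; first by left.
  case=> [hn0|[h1 h2]]; first by rewrite hn0 in hn.
  right; split; apply: agree_uT => //; [exact: (proj2_sig p)|exact: (proj2_sig q)
                                    |exact: (proj2_sig q)|exact: (proj2_sig p)].
- move=> n p H; rewrite /in_Pn /=; exact: Pn_uT (proj2_sig p) n H.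
- move=> p k H; rewrite /height_le /=; exact: height_uT (proj2_sig p) k H.
- move=> s1 s2 hR p hp; have [hP <-] := HR _ _ hR.
  rewrite /root_seq /= root_uT; last exact: (proj2_sig p).
  by move: hp; rewrite /proot /root_seq => -> /=; rewrite hP.
Qed.

End Generic.

From mathcomp Require Import zify.
Local Open Scope mset_scope.

Ltac mt h a := apply/msetP; let y := fresh "y" in intro y;
  rewrite ?mset1DE ?msetB1E ?mset1DE ?msetB1E ?msetE2 ?mset1DE ?msetB1E ?msetnE;
  move: (h); rewrite in_mset; case: (eqVneq y a) => [->|?] /=;
  repeat match goal with |- context [nat_of_bool ?b] =>
    lazymatch b with true => fail | false => fail | _ => case: b => /= end end; lia.

Ltac pe h a := first [reflexivity | congr (Some _); pe h a
  | congr (_, _); first [reflexivity | mt h a] | mt h a].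

Lemma mem_neq (a x : form) (D : fmset) : a \in x +` D -> x <> a -> a \in D.
Proof. by rewrite in_mset1D => /orP [/eqP -> /(_ erefl)|]. Qed.

Lemma mem_boxes (a : form) (G Pi : fmset) :
  a \in G `+` boxes Pi -> (forall y, a <> Box y) -> a \in G.
Proof.
rewrite in_msetD => /orP [//|]; rewrite /boxes in_mset mset_seqE => hc hb.
case: (boolP (a \in map Box (enum_mset Pi))) hc => [/mapP [y _ e]|/count_memPn ->] //.
by case: (hb y).
Qed.

Definition bot_P (s : sequent) : bool := Bot \in s.2.
Definition bot_tf (s : sequent) : sequent := (s.1, s.2 `\ Bot).
Definition bot_skip (r : rule) : option nat := None.

Lemma bot_H_skip r s p c : bot_skip r = Some c -> rule_ok r s p -> bot_P s ->
  [/\ c < arity r, p c = Some (bot_tf s) & ~~ (isbox r && (c == 1))].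
Proof. by []. Qed.

Lemma bot_H_step r s p : bot_skip r = None -> rule_ok r s p -> bot_P s ->
  rule_ok r (bot_tf s) (fun i => if isbox r && (i == 1) then p i else omap bot_tf (p i))
  /\ (forall i s', i < arity r -> ~~ (isbox r && (i == 1)) -> p i = Some s' -> bot_P s').
Proof.
move=> _; case: r => [|A' B'|A' B'|B'|Pi A'|A'] /=.
- case=> [[G [D [q ->]]]|[G [D ->]]]; rewrite /bot_P /bot_tf /= => h.
    have hD : Bot \in D by apply: (mem_neq _ _ _ h); discriminate.
    by split=> //; left; exists G, (D `\ Bot), q; pe hD Bot.
  by split=> //; right; exists G, (D `\ Bot).
- case=> G [D [-> e0 e1]]; rewrite /bot_P /bot_tf /= => h; split.
    by exists G, (D `\ Bot); rewrite e0 e1; split; pe h Bot.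
  by move=> [|[|i]] //= s' _ _; rewrite ?e0 ?e1 => -[<-] /=; rewrite ?in_mset1D ?h ?orbT.
- case=> G [D [-> e0]]; rewrite /bot_P /bot_tf /= => h.
  have hD : Bot \in D by apply: (mem_neq _ _ _ h); discriminate.
  split.
    by exists G, (D `\ Bot); rewrite e0; split; pe hD Bot.
  by move=> [|i] //= s' _ _; rewrite ?e0 => -[<-] /=; rewrite ?in_mset1D ?hD ?orbT.
- case=> G [D [-> e0]]; rewrite /bot_P /bot_tf /= => h; split.
    by exists G, (D `\ Bot); rewrite e0; split; pe h Bot.
  by move=> [|i] //= s' _ _; rewrite ?e0 => -[<-] /=; rewrite ?in_mset1D ?h ?orbT.
- case=> G [D [-> e0 e1]]; rewrite /bot_P /bot_tf /= => h.
  have hD : Bot \in D by apply: (mem_neq _ _ _ h); discriminate.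
  split.
    by exists G, (D `\ Bot); rewrite e0 e1; split; pe hD Bot.
  by move=> [|[|i]] //= s' _ _; rewrite ?e0 ?e1 => -[<-] /=; rewrite ?in_mset1D ?hD ?orbT.
- case=> G [D [-> e0 e1]]; rewrite /bot_P /bot_tf /= => h; split.
    by exists G, (D `\ Bot); rewrite e0 e1; split; pe h Bot.
  by move=> [|[|i]] //= s' _ _; rewrite ?e0 ?e1 => -[<-] /=; rewrite ?in_mset1D ?h ?orbT.
Qed.

Section LiImp.
Variables A B : form.
Definition lii_P (s : sequent) : bool := Imp A B \in s.1.
Definition lii_tf (s : sequent) : sequent := (B +` (s.1 `\ Imp A B), s.2).
Definition lii_skip (r : rule) : option nat :=
  if r is RImpL A' B' then (if (A' == A) && (B' == B) then Some 0 else None) else None.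

Lemma lii_H_skip r s p c : lii_skip r = Some c -> rule_ok r s p -> lii_P s ->
  [/\ c < arity r, p c = Some (lii_tf s) & ~~ (isbox r && (c == 1))].
Proof.
case: r => // A' B' /=; case: ifP => // /andP [/eqP -> /eqP ->] [<-].
case=> G [D [-> e0 e1]] _; split => //.
by rewrite e0 /lii_tf /= msetD1K.
Qed.

Lemma lii_H_step r s p : lii_skip r = None -> rule_ok r s p -> lii_P s ->
  rule_ok r (lii_tf s) (fun i => if isbox r && (i == 1) then p i else omap lii_tf (p i))
  /\ (forall i s', i < arity r -> ~~ (isbox r && (i == 1)) -> p i = Some s' -> lii_P s').
Proof.
case: r => [|A' B'|A' B'|B'|Pi A'|A'] /= hs.
- case=> [[G [D [q ->]]]|[G [D ->]]]; rewrite /lii_P /lii_tf /= => h.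
    have hG : Imp A B \in G by apply: (mem_neq _ _ _ h); discriminate.
    by split=> //; left; exists (B +` (G `\ Imp A B)), D, q; pe hG (Imp A B).
  have hG : Imp A B \in G by apply: (mem_neq _ _ _ h); discriminate.
  by split=> //; right; exists (B +` (G `\ Imp A B)), D; pe hG (Imp A B).
- have hne : Imp A' B' <> Imp A B by move=> [e1 e2]; rewrite e1 e2 !eqxx in hs.
  case=> G [D [-> e0 e1]]; rewrite /lii_P /lii_tf /= => h.
  have hG : Imp A B \in G by apply: (mem_neq _ _ _ h).
  split.
    by exists (B +` (G `\ Imp A B)), D; rewrite e0 e1; split; pe hG (Imp A B).
  by move=> [|[|i]] //= s' _ _; rewrite ?e0 ?e1 => -[<-] /=; rewrite ?in_mset1D ?hG ?orbT.
- case=> G [D [-> e0]]; rewrite /lii_P /lii_tf /= => h; split.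
    by exists (B +` (G `\ Imp A B)), D; rewrite e0; split; pe h (Imp A B).
  by move=> [|i] //= s' _ _; rewrite ?e0 => -[<-] /=; rewrite ?in_mset1D ?h ?orbT.
- case=> G [D [-> e0]]; rewrite /lii_P /lii_tf /= => h.
  have hG : Imp A B \in G by apply: (mem_neq _ _ _ h); discriminate.
  split.
    by exists (B +` (G `\ Imp A B)), D; rewrite e0; split; pe hG (Imp A B).
  by move=> [|i] //= s' _ _; rewrite ?e0 => -[<-] /=; rewrite ?in_mset1D ?hG ?orbT.
- case=> G [D [-> e0 e1]]; rewrite /lii_P /lii_tf /= => h.
  have hG : Imp A B \in G by apply: (mem_boxes _ _ _ h) => y; discriminate.
  split.
    by exists (B +` (G `\ Imp A B)), D; rewrite e0 e1; split; pe hG (Imp A B).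
  by move=> [|[|i]] //= s' _ _; rewrite ?e0 ?e1 => -[<-] /=; rewrite ?in_mset1D ?h ?orbT.
- case=> G [D [-> e0 e1]]; rewrite /lii_P /lii_tf /= => h; split.
    by exists (B +` (G `\ Imp A B)), D; rewrite e0 e1; split; pe h (Imp A B).
  by move=> [|[|i]] //= s' _ _; rewrite ?e0 ?e1 => -[<-] /=; rewrite ?in_mset1D ?h ?orbT.
Qed.

Lemma sa_li_imp : strongly_admissible (li_imp A B).
Proof.
apply: (generic_sa lii_P lii_tf lii_skip lii_H_skip lii_H_step).
move=> s1 s2 [G [D [-> ->]]]; split; first by rewrite /lii_P /= mset1D1.
by rewrite /lii_tf /= msetD1K.
Qed.
End LiImp.

Section RiImp.
Variables A B : form.
Definition rii_P (s : sequent) : bool := Imp A B \in s.1.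
Definition rii_tf (s : sequent) : sequent := (s.1 `\ Imp A B, A +` s.2).
Definition rii_skip (r : rule) : option nat :=
  if r is RImpL A' B' then (if (A' == A) && (B' == B) then Some 1 else None) else None.

Lemma rii_H_skip r s p c : rii_skip r = Some c -> rule_ok r s p -> rii_P s ->
  [/\ c < arity r, p c = Some (rii_tf s) & ~~ (isbox r && (c == 1))].
Proof.
case: r => // A' B' /=; case: ifP => // /andP [/eqP -> /eqP ->] [<-].
case=> G [D [-> e0 e1]] _; split => //.
by rewrite e1 /rii_tf /= msetD1K.
Qed.

Lemma rii_H_step r s p : rii_skip r = None -> rule_ok r s p -> rii_P s ->
  rule_ok r (rii_tf s) (fun i => if isbox r && (i == 1) then p i else omap rii_tf (p i))
  /\ (forall i s', i < arity r -> ~~ (isbox r && (i == 1)) -> p i = Some s' -> rii_P s').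
Proof.
case: r => [|A' B'|A' B'|B'|Pi A'|A'] /= hs.
- case=> [[G [D [q ->]]]|[G [D ->]]]; rewrite /rii_P /rii_tf /= => h.
    have hG : Imp A B \in G by apply: (mem_neq _ _ _ h); discriminate.
    by split=> //; left; exists (G `\ Imp A B), (A +` D), q; pe hG (Imp A B).
  have hG : Imp A B \in G by apply: (mem_neq _ _ _ h); discriminate.
  by split=> //; right; exists (G `\ Imp A B), (A +` D); pe hG (Imp A B).
- have hne : Imp A' B' <> Imp A B by move=> [e1 e2]; rewrite e1 e2 !eqxx in hs.
  case=> G [D [-> e0 e1]]; rewrite /rii_P /rii_tf /= => h.
  have hG : Imp A B \in G by apply: (mem_neq _ _ _ h).
  split.
    by exists (G `\ Imp A B), (A +` D); rewrite e0 e1; split; pe hG (Imp A B).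
  by move=> [|[|i]] //= s' _ _; rewrite ?e0 ?e1 => -[<-] /=; rewrite ?in_mset1D ?hG ?orbT.
- case=> G [D [-> e0]]; rewrite /rii_P /rii_tf /= => h; split.
    by exists (G `\ Imp A B), (A +` D); rewrite e0; split; pe h (Imp A B).
  by move=> [|i] //= s' _ _; rewrite ?e0 => -[<-] /=; rewrite ?in_mset1D ?h ?orbT.
- case=> G [D [-> e0]]; rewrite /rii_P /rii_tf /= => h.
  have hG : Imp A B \in G by apply: (mem_neq _ _ _ h); discriminate.
  split.
    by exists (G `\ Imp A B), (A +` D); rewrite e0; split; pe hG (Imp A B).
  by move=> [|i] //= s' _ _; rewrite ?e0 => -[<-] /=; rewrite ?in_mset1D ?hG ?orbT.
- case=> G [D [-> e0 e1]]; rewrite /rii_P /rii_tf /= => h.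
  have hG : Imp A B \in G by apply: (mem_boxes _ _ _ h) => y; discriminate.
  split.
    by exists (G `\ Imp A B), (A +` D); rewrite e0 e1; split; pe hG (Imp A B).
  by move=> [|[|i]] //= s' _ _; rewrite ?e0 ?e1 => -[<-] /=; rewrite ?in_mset1D ?h ?orbT.
- case=> G [D [-> e0 e1]]; rewrite /rii_P /rii_tf /= => h; split.
    by exists (G `\ Imp A B), (A +` D); rewrite e0 e1; split; pe h (Imp A B).
  by move=> [|[|i]] //= s' _ _; rewrite ?e0 ?e1 => -[<-] /=; rewrite ?in_mset1D ?h ?orbT.
Qed.

Lemma sa_ri_imp : strongly_admissible (ri_imp A B).
Proof.
apply: (generic_sa rii_P rii_tf rii_skip rii_H_skip rii_H_step).
move=> s1 s2 [G [D [-> ->]]]; split; first by rewrite /rii_P /= mset1D1.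
by rewrite /rii_tf /= msetD1K.
Qed.
End RiImp.

Section IImp.
Variables A B : form.
Definition ii_P (s : sequent) : bool := Imp A B \in s.2.
Definition ii_tf (s : sequent) : sequent := (A +` s.1, B +` (s.2 `\ Imp A B)).
Definition ii_skip (r : rule) : option nat :=
  if r is RImpR A' B' then (if (A' == A) && (B' == B) then Some 0 else None) else None.

Lemma ii_H_skip r s p c : ii_skip r = Some c -> rule_ok r s p -> ii_P s ->
  [/\ c < arity r, p c = Some (ii_tf s) & ~~ (isbox r && (c == 1))].
Proof.
case: r => // A' B' /=; case: ifP => // /andP [/eqP -> /eqP ->] [<-].
case=> G [D [-> e0]] _; split => //.
by rewrite e0 /ii_tf /= msetD1K.
Qed.

Lemma ii_H_step r s p : ii_skip r = None -> rule_ok r s p -> ii_P s ->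
  rule_ok r (ii_tf s) (fun i => if isbox r && (i == 1) then p i else omap ii_tf (p i))
  /\ (forall i s', i < arity r -> ~~ (isbox r && (i == 1)) -> p i = Some s' -> ii_P s').
Proof.
case: r => [|A' B'|A' B'|B'|Pi A'|A'] /= hs.
- case=> [[G [D [q ->]]]|[G [D ->]]]; rewrite /ii_P /ii_tf /= => h.
    have hD : Imp A B \in D by apply: (mem_neq _ _ _ h); discriminate.
    by split=> //; left; exists (A +` G), (B +` (D `\ Imp A B)), q; pe hD (Imp A B).
  by split=> //; right; exists (A +` G), (B +` (D `\ Imp A B)); pe h (Imp A B).
- case=> G [D [-> e0 e1]]; rewrite /ii_P /ii_tf /= => h; split.
    by exists (A +` G), (B +` (D `\ Imp A B)); rewrite e0 e1; split; pe h (Imp A B).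
  by move=> [|[|i]] //= s' _ _; rewrite ?e0 ?e1 => -[<-] /=; rewrite ?in_mset1D ?h ?orbT.
- have hne : Imp A' B' <> Imp A B by move=> [e1 e2]; rewrite e1 e2 !eqxx in hs.
  case=> G [D [-> e0]]; rewrite /ii_P /ii_tf /= => h.
  have hD : Imp A B \in D by apply: (mem_neq _ _ _ h).
  split.
    by exists (A +` G), (B +` (D `\ Imp A B)); rewrite e0; split; pe hD (Imp A B).
  by move=> [|i] //= s' _ _; rewrite ?e0 => -[<-] /=; rewrite ?in_mset1D ?hD ?orbT.
- case=> G [D [-> e0]]; rewrite /ii_P /ii_tf /= => h; split.
    by exists (A +` G), (B +` (D `\ Imp A B)); rewrite e0; split; pe h (Imp A B).
  by move=> [|i] //= s' _ _; rewrite ?e0 => -[<-] /=; rewrite ?in_mset1D ?h ?orbT.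
- case=> G [D [-> e0 e1]]; rewrite /ii_P /ii_tf /= => h.
  have hD : Imp A B \in D by apply: (mem_neq _ _ _ h); discriminate.
  split.
    by exists (A +` G), (B +` (D `\ Imp A B)); rewrite e0 e1; split; pe hD (Imp A B).
  by move=> [|[|i]] //= s' _ _; rewrite ?e0 ?e1 => -[<-] /=; rewrite ?in_mset1D ?hD ?orbT.
- case=> G [D [-> e0 e1]]; rewrite /ii_P /ii_tf /= => h; split.
    by exists (A +` G), (B +` (D `\ Imp A B)); rewrite e0 e1; split; pe h (Imp A B).
  by move=> [|[|i]] //= s' _ _; rewrite ?e0 ?e1 => -[<-] /=; rewrite ?in_mset1D ?h ?orbT.
Qed.

Lemma sa_i_imp : strongly_admissible (i_imp A B).
Proof.
apply: (generic_sa ii_P ii_tf ii_skip ii_H_skip ii_H_step).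
move=> s1 s2 [G [D [-> ->]]]; split; first by rewrite /ii_P /= mset1D1.
by rewrite /ii_tf /= msetD1K.
Qed.
End IImp.

Section LiBox.
Variable A : form.
Definition lb_P (s : sequent) : bool := Box A \in s.2.
Definition lb_tf (s : sequent) : sequent := (s.1, A +` (s.2 `\ Box A)).
Definition lb_skip (r : rule) : option nat :=
  if r is RBox Pi A' then (if A' == A then Some 0 else None) else None.

Lemma lb_H_skip r s p c : lb_skip r = Some c -> rule_ok r s p -> lb_P s ->
  [/\ c < arity r, p c = Some (lb_tf s) & ~~ (isbox r && (c == 1))].
Proof.
case: r => // Pi A' /=; case: ifP => // /eqP -> [<-].
case=> G [D [-> e0 e1]] _; split => //.
by rewrite e0 /lb_tf /= msetD1K.
Qed.

Lemma lb_H_step r s p : lb_skip r = None -> rule_ok r s p -> lb_P s ->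
  rule_ok r (lb_tf s) (fun i => if isbox r && (i == 1) then p i else omap lb_tf (p i))
  /\ (forall i s', i < arity r -> ~~ (isbox r && (i == 1)) -> p i = Some s' -> lb_P s').
Proof.
case: r => [|A' B'|A' B'|B'|Pi A'|A'] /= hs.
- case=> [[G [D [q ->]]]|[G [D ->]]]; rewrite /lb_P /lb_tf /= => h.
    have hD : Box A \in D by apply: (mem_neq _ _ _ h); discriminate.
    by split=> //; left; exists G, (A +` (D `\ Box A)), q; pe hD (Box A).
  by split=> //; right; exists G, (A +` (D `\ Box A)); pe h (Box A).
- case=> G [D [-> e0 e1]]; rewrite /lb_P /lb_tf /= => h; split.
    by exists G, (A +` (D `\ Box A)); rewrite e0 e1; split; pe h (Box A).
  by move=> [|[|i]] //= s' _ _; rewrite ?e0 ?e1 => -[<-] /=; rewrite ?in_mset1D ?h ?orbT.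
- case=> G [D [-> e0]]; rewrite /lb_P /lb_tf /= => h.
  have hD : Box A \in D by apply: (mem_neq _ _ _ h); discriminate.
  split.
    by exists G, (A +` (D `\ Box A)); rewrite e0; split; pe hD (Box A).
  by move=> [|i] //= s' _ _; rewrite ?e0 => -[<-] /=; rewrite ?in_mset1D ?hD ?orbT.
- case=> G [D [-> e0]]; rewrite /lb_P /lb_tf /= => h; split.
    by exists G, (A +` (D `\ Box A)); rewrite e0; split; pe h (Box A).
  by move=> [|i] //= s' _ _; rewrite ?e0 => -[<-] /=; rewrite ?in_mset1D ?h ?orbT.
- have hne : Box A' <> Box A by move=> [e1]; rewrite e1 eqxx in hs.
  case=> G [D [-> e0 e1]]; rewrite /lb_P /lb_tf /= => h.
  have hD : Box A \in D by apply: (mem_neq _ _ _ h).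
  split.
    by exists G, (A +` (D `\ Box A)); rewrite e0 e1; split; pe hD (Box A).
  by move=> [|[|i]] //= s' _ _; rewrite ?e0 ?e1 => -[<-] /=; rewrite ?in_mset1D ?hD ?orbT.
- case=> G [D [-> e0 e1]]; rewrite /lb_P /lb_tf /= => h; split.
    by exists G, (A +` (D `\ Box A)); rewrite e0 e1; split; pe h (Box A).
  by move=> [|[|i]] //= s' _ _; rewrite ?e0 ?e1 => -[<-] /=; rewrite ?in_mset1D ?h ?orbT.
Qed.

Lemma sa_li_box : strongly_admissible (li_box A).
Proof.
apply: (generic_sa lb_P lb_tf lb_skip lb_H_skip lb_H_step).
move=> s1 s2 [G [D [-> ->]]]; split; first by rewrite /lb_P /= mset1D1.
by rewrite /lb_tf /= msetD1K.
Qed.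
End LiBox.

Lemma sa_i_bot : strongly_admissible i_bot.
Proof.
apply: (generic_sa bot_P bot_tf bot_skip bot_H_skip bot_H_step).
move=> s1 s2 [G [D [-> ->]]]; split; first by rewrite /bot_P /= mset1D1.
by rewrite /bot_tf /= msetD1K.
Qed.

Theorem lemma5p2 : forall A B : form,
  [/\ strongly_admissible (li_imp A B),
      strongly_admissible (ri_imp A B),
      strongly_admissible (i_imp A B),
      strongly_admissible i_bot
    & strongly_admissible (li_box A)].
Proof.
move=> A B; split.
- exact: sa_li_imp.
- exact: sa_ri_imp.
- exact: sa_i_imp.
- exact: sa_i_bot.
- exact: sa_li_box.
Qed.
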